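(* Let $R$ be a ring. Let $P$ be a polygon divided into subpolygons $P^1$ and $P^2$ by the dissection $\{(t,v),(v,t)\}$; let $V^\alpha$ be the vertex set of $P^\alpha$ and $U^\alpha=V^\alpha\setminus\{t,v\}$. Let $D^\alpha$ be a dissection of $P^\alpha$ ($\alpha=1,2$) and $D=\{(t,v),(v,t)\}\,\dot\cup\,D^1\,\dot\cup\,D^2$. Let $c^\alpha:\operatorname{diag}P^\alpha\to R$ be a weak frieze with respect to $D^\alpha$ for $\alpha=1,2$, and assume $c^1_{tv}=c^2_{tv}$ and $c^1_{vt}=c^2_{vt}$, and that these elements lie in $R^*$. Then there exists a unique map $c:\operatorname{diag}P\to R$ such that (i) $c|_{\operatorname{diag}P^\alpha}=c^\alpha$ for $\alpha=1,2$, and (ii) $c$ is a weak frieze with respect to $D$. Explicitly, for distinct vertices $i,k$: $c_{ik}=c^1_{ik}$ if $i,k\in V^1$; $c_{ik}=c^2_{ik}$ if $i,k\in V^2$ (these agree when $i,k\in\{t,v\}$); $c_{ik}=c^1_{it}(c^1_{vt})^{-1}c^2_{vk}+c^1_{iv}(c^1_{tv})^{-1}c^2_{tk}$ if $i\in U^1$, $k\in U^2$; and $c_{ik}=c^2_{it}(c^2_{vt})^{-1}c^1_{vk}+c^2_{iv}(c^2_{tv})^{-1}c^1_{tk}$ if $i\in U^2$, $k\in U^1$.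
   Context: $R^*$ denotes the invertible elements of $R$. A polygon is a finite set of at least three vertices with a cyclic ordering (thought of as a convex polygon); a subpolygon is a subset of at least three vertices with induced cyclic ordering. $\operatorname{diag}P$ is the set of ordered pairs of distinct vertices. A diagonal is an edge if its endpoints are neighbours, otherwise internal. $(i,k)$ and $(j,\ell)$ cross if $i,j,k,\ell$ are pairwise distinct with $i<j<k<\ell$ or $i<\ell<k<j$ cyclically. A dissection is a set of internal diagonals closed under reversal with no two crossing; the internal diagonal pair $\{(t,v),(v,t)\}$ divides $P$ into the two subpolygons $P^1,P^2$ whose vertex sets are the vertices on either side of $(t,v)$ together with $t,v$. Write $c_{ik}=c(i,k)$, $c_{xx}=0$. A map $c:\operatorname{diag}P\to R$ is a weak frieze with respect to a dissection $D$ if $c_{rs}\in R^*$ for $(r,s)\in D$ and whenever $(i,k)$ crosses $(r,s)$ with $(r,s),(s,r)\in D$, $c_{ik}=c_{ir}c_{sr}^{-1}c_{sk}+c_{is}c_{rs}^{-1}c_{rk}$. *)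

(* Defs.v *)
From mathcomp Require Import all_boot all_order all_algebra.
Set Implicit Arguments. Unset Strict Implicit. Unset Printing Implicit Defensive.
Import GRing.Theory.
Local Open Scope ring_scope.

(* The polygon P is modelled as the vertex set 'I_n (n >= 3), with the
   cyclic ordering 0 -> 1 -> ... -> n-1 -> 0.  A subpolygon is a set
   V : {set 'I_n} of at least three vertices with the induced cyclic order. *)

Definition cyc {n : nat} (a b c : 'I_n) : bool :=
  [|| (a < b < c)%N, (b < c < a)%N | (c < a < b)%N].

Definition distinct4 {n : nat} (a b c d : 'I_n) : bool :=
  [&& a != b, a != c, a != d, b != c, b != d & c != d].

Definition cross {n : nat} (i k j l : 'I_n) : bool :=
  distinct4 i j k l &&
  ((cyc i j k && cyc i k l) || (cyc i l k && cyc i k j)).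

Definition is_polygon {n : nat} (V : {set 'I_n}) : Prop := (3 <= #|V|)%N.

Definition in_diag {n : nat} (V : {set 'I_n}) (p : 'I_n * 'I_n) : bool :=
  [&& p.1 \in V, p.2 \in V & p.1 != p.2].

Definition neighbours {n : nat} (V : {set 'I_n}) (i k : 'I_n) : bool :=
  [forall x in V, ~~ cyc i x k] || [forall x in V, ~~ cyc k x i].

Definition internal_diag {n : nat} (V : {set 'I_n}) (p : 'I_n * 'I_n) : bool :=
  in_diag V p && ~~ neighbours V p.1 p.2.

Definition dissection {n : nat} (V : {set 'I_n}) (D : {set 'I_n * 'I_n}) : Prop :=
  [/\ forall p, p \in D -> internal_diag V p,
      forall r s, (r, s) \in D -> (s, r) \in D
    & forall i k r s, (i, k) \in D -> (r, s) \in D -> ~~ cross i k r s].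

(* c : diag V -> R, represented by a function on all pairs of which only the
   values on pairs of distinct vertices of V are relevant. *)
Definition weak_frieze {R : unitRingType} {n : nat} (V : {set 'I_n})
    (D : {set 'I_n * 'I_n}) (c : 'I_n -> 'I_n -> R) : Prop :=
  (forall r s, (r, s) \in D -> c r s \is a GRing.unit) /\
  (forall i k r s, in_diag V (i, k) -> (r, s) \in D -> (s, r) \in D ->
     cross i k r s ->
     c i k = c i r * (c s r)^-1 * c s k + c i s * (c r s)^-1 * c r k).

Definition side1 {n : nat} (t v : 'I_n) : {set 'I_n} :=
  [set x | (x == t) || (x == v) || cyc t x v].
Definition side2 {n : nat} (t v : 'I_n) : {set 'I_n} :=
  [set x | (x == t) || (x == v) || cyc v x t].

(* Main.v *)
Require Import Defs.
From mathcomp Require Import all_boot all_order all_algebra zify.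
Set Implicit Arguments. Unset Strict Implicit.
Lemma ordE n (a b : 'I_n) : (a == b) = (nat_of_ord a == nat_of_ord b). Proof. by []. Qed.
Ltac unf := rewrite /cross /distinct4 /side1 /side2 ?inE /cyc ?ordE.
Ltac crush := repeat match goal with
 | H : is_true (_ && _) |- _ => case/andP: H => ? ?
 | H : is_true (_ || _) |- _ => case/orP: H => H
 end; lia.
Lemma X1 n (i k r s : 'I_n) : cross i k r s = distinct4 i r k s && (cyc r i s != cyc r k s).
Proof. rewrite /cross; case: (distinct4 i r k s) /andP => //= -[]; rewrite /cyc !ordE; lia. Qed.
Lemma SSt n (t v i r s : 'I_n) : t != v -> cyc v i t -> r \in side1 t v -> s \in side1 t v -> r != s -> t != r -> t != s -> cyc r t s = cyc r i s.
Proof. unf. move=> *. crush. Qed.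
Lemma SSv n (t v i r s : 'I_n) : t != v -> cyc v i t -> r \in side1 t v -> s \in side1 t v -> r != s -> v != r -> v != s -> cyc r v s = cyc r i s.
Proof. unf. move=> *. crush. Qed.
Lemma INt n (t v k r s : 'I_n) : t != v -> r \in side1 t v -> s \in side1 t v -> r != s -> t != r -> t != s -> k != r -> k != s -> cyc r k s != cyc r t s -> cyc t k v.
Proof. unf. move=> *. crush. Qed.
Lemma INv n (t v k r s : 'I_n) : t != v -> r \in side1 t v -> s \in side1 t v -> r != s -> v != r -> v != s -> k != r -> k != s -> cyc r k s != cyc r v s -> cyc t k v.
Proof. unf. move=> *. crush. Qed.
Lemma K2a n (i k t v : 'I_n) : cyc v i t -> cross i k t v -> cyc t k v.
Proof. unf. lia. Qed.
Lemma K2b n (i k t v : 'I_n) : cyc v i t -> cross i k v t -> cyc t k v.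
Proof. unf. lia. Qed.
Lemma K2 n (i k t v : 'I_n) : t != v -> cross i k t v -> (cyc t i v && cyc v k t) || (cyc v i t && cyc t k v).
Proof. unf. lia. Qed.
Lemma K2' n (i k t v : 'I_n) : t != v -> cross i k v t -> (cyc t i v && cyc v k t) || (cyc v i t && cyc t k v).
Proof. unf. lia. Qed.
Lemma K3 n (i k t v : 'I_n) : cyc t i v -> cyc v k t -> cross i k t v.
Proof. unf. lia. Qed.
Lemma notS1 n (t v x : 'I_n) : t != v -> x \notin side1 t v -> cyc v x t.
Proof. unf. lia. Qed.
Lemma notS2 n (t v x : 'I_n) : t != v -> x \notin side2 t v -> cyc t x v.
Proof. unf. lia. Qed.
Lemma U2notS1 n (t v x : 'I_n) : cyc v x t -> x \notin side1 t v.
Proof. unf. lia. Qed.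
Lemma U1notS2 n (t v x : 'I_n) : cyc t x v -> x \notin side2 t v.
Proof. unf. lia. Qed.
Lemma L_both n (t v x : 'I_n) : x \in side1 t v -> x \in side2 t v -> (x == t) || (x == v).
Proof. unf. lia. Qed.
Lemma U1E n (t v x : 'I_n) : (x \in side1 t v :\: [set t; v]) = cyc t x v.
Proof. rewrite !inE /cyc !ordE. lia. Qed.
Lemma U2E n (t v x : 'I_n) : (x \in side2 t v :\: [set t; v]) = cyc v x t.
Proof. rewrite !inE /cyc !ordE. lia. Qed.
Lemma cycS1 n (t v x : 'I_n) : cyc t x v -> x \in side1 t v.
Proof. by rewrite inE => ->; rewrite orbT. Qed.
Lemma cycS2 n (t v x : 'I_n) : cyc v x t -> x \in side2 t v.
Proof. by rewrite inE => ->; rewrite orbT. Qed.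
Lemma cycne n (a b c : 'I_n) : cyc a b c -> (a != b) && (b != c) && (a != c).
Proof. rewrite /cyc !ordE. lia. Qed.
Lemma sideSw1 n (t v : 'I_n) : side1 v t = side2 t v.
Proof. by apply/setP => x; rewrite !inE (orbC (x == v)). Qed.
Lemma sideSw2 n (t v : 'I_n) : side2 v t = side1 t v.
Proof. by apply/setP => x; rewrite !inE (orbC (x == v)). Qed.
Lemma tS1 n (t v : 'I_n) : t \in side1 t v. Proof. by rewrite inE eqxx. Qed.
Lemma vS1 n (t v : 'I_n) : v \in side1 t v. Proof. by rewrite inE eqxx orbT. Qed.
Lemma tS2 n (t v : 'I_n) : t \in side2 t v. Proof. by rewrite inE eqxx. Qed.
Lemma vS2 n (t v : 'I_n) : v \in side2 t v. Proof. by rewrite inE eqxx orbT. Qed.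

Lemma K4 n (t v i k r s : 'I_n) : t != v -> cyc v i t -> r \in side1 t v -> s \in side1 t v -> cross i k r s ->
  [/\ cyc t k v, (t == r) || (t == s) || cross t k r s & (v == r) || (v == s) || cross v k r s].
Proof.
move=> tv vit rS sS cr; have := cr; rewrite X1 => /andP[d sep].
case/andP: d => ir /andP[ik /andP[is_ /andP[rk /andP[rs ks]]]].
have kr : k != r by rewrite eq_sym.
have ks' : k != s by [].
have Ht : t != r -> t != s -> cross t k r s.
  move=> tr ts; rewrite X1 (SSt tv vit) //.
  rewrite sep andbT /distinct4 tr ts rk rs ks /= !andbT.
  by apply/eqP => tk; move: sep; rewrite -tk (SSt tv vit) // eqxx.
have Hv : v != r -> v != s -> cross v k r s.
  move=> vr vs; rewrite X1 (SSv tv vit) //.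
  rewrite sep andbT /distinct4 vr vs rk rs ks /= !andbT.
  by apply/eqP => vk; move: sep; rewrite -vk (SSv tv vit) // eqxx.
split.
- case: (boolP (t == r)) => tr; case: (boolP (t == s)) => ts.
  + by move: rs; rewrite -(eqP tr) -(eqP ts) eqxx.
  + case: (boolP (v == s)) => vs.
      by move: cr; rewrite -(eqP tr) -(eqP vs); apply: K2a.
    case: (boolP (v == r)) => vr; first by move: tv; rewrite (eqP tr) (eqP vr) eqxx.
    by apply: (INv tv rS sS rs vr vs kr ks); rewrite (SSv tv vit) // eq_sym.
  + case: (boolP (v == r)) => vr.
      by move: cr; rewrite -(eqP ts) -(eqP vr); apply: K2b.
    case: (boolP (v == s)) => vs; first by move: tv; rewrite (eqP ts) (eqP vs) eqxx.
    by apply: (INv tv rS sS rs vr vs kr ks); rewrite (SSv tv vit) // eq_sym.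
  + by apply: (INt tv rS sS rs tr ts kr ks); rewrite (SSt tv vit) // eq_sym.
- by case: (boolP (t == r)) => //= tr; case: (boolP (t == s)) => //= ts; apply: Ht.
- by case: (boolP (v == r)) => //= vr; case: (boolP (v == s)) => //= vs; apply: Hv.
Qed.

Lemma crossC n (i k r s : 'I_n) : cross i k r s = cross k i r s.
Proof.
rewrite !X1 /distinct4 /cyc !ordE; lia.
Qed.

Lemma K4' n (t v i k r s : 'I_n) : t != v -> cyc v k t -> r \in side1 t v -> s \in side1 t v -> cross i k r s ->
  [/\ cyc t i v, (t == r) || (t == s) || cross i t r s & (v == r) || (v == s) || cross i v r s].
Proof.
move=> tv vkt rS sS; rewrite crossC => cr.
by case: (K4 tv vkt rS sS cr) => a b c; split => //; rewrite -crossC.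
Qed.

Import GRing.Theory.
Local Open Scope ring_scope.
Section Alg.
Variable R : unitRingType.
Definition zd {n} (c : 'I_n -> 'I_n -> R) (x y : 'I_n) : R := if x == y then 0 else c x y.

Lemma cross_dist n (i k r s : 'I_n) : cross i k r s ->
  [&& i != r, i != k, i != s, r != k, r != s & k != s].
Proof. by case/andP. Qed.

Lemma fr_left n (S : {set 'I_n}) (D : {set 'I_n * 'I_n}) (c1 : 'I_n -> 'I_n -> R) :
  (forall p, p \in D -> in_diag S p) -> weak_frieze S D c1 ->
  forall y k r s, y \in S -> k \in S -> y != k -> (r, s) \in D -> (s, r) \in D ->
  r != k -> s != k -> r != s -> (y == r) || (y == s) || cross y k r s ->
  c1 y k = zd c1 y r * (c1 s r)^-1 * c1 s k + zd c1 y s * (c1 r s)^-1 * c1 r k.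
Proof.
move=> hD [hU hF] y k r s yS kS yk rs sr rk sk rns hc.
rewrite /zd; case: (y =P r) => [->|yr].
  by rewrite /= (negbTE rns) !mul0r add0r mulrV ?mul1r //; apply: hU.
case: (y =P s) => [->|ys].
  by rewrite /= !mul0r addr0 mulrV ?mul1r //; apply: hU.
move/eqP/negbTE: yr => yr; move/eqP/negbTE: ys => ys.
rewrite /=; rewrite yr ys /= in hc; apply: hF => //.
by rewrite /in_diag /= yS kS yk.
Qed.

Lemma fr_right n (S : {set 'I_n}) (D : {set 'I_n * 'I_n}) (c1 : 'I_n -> 'I_n -> R) :
  (forall p, p \in D -> in_diag S p) -> weak_frieze S D c1 ->
  forall i y r s, i \in S -> y \in S -> i != y -> (r, s) \in D -> (s, r) \in D ->
  i != r -> i != s -> r != s -> (y == r) || (y == s) || cross i y r s ->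
  c1 i y = c1 i r * (c1 s r)^-1 * zd c1 s y + c1 i s * (c1 r s)^-1 * zd c1 r y.
Proof.
move=> hD [hU hF] i y r s iS yS iy rs sr ir is_ rns hc.
rewrite /zd; case: (y =P r) => [->|yr].
  rewrite eqxx (eq_sym s) (negbTE rns) mulr0 addr0 mulrVK //; apply: hU => //.
case: (y =P s) => [->|ys].
  by rewrite eqxx (negbTE rns) mulr0 add0r mulrVK //; apply: hU.
move/eqP/negbTE: yr => yr; move/eqP/negbTE: ys => ys.
rewrite yr ys in hc; rewrite ![_ == y]eq_sym ?yr ?ys /=; apply: hF => //.
by rewrite /in_diag /= iS yS iy.
Qed.
End Alg.
Lemma U1cyc n (t v x : 'I_n) : x \in side1 t v -> x != t -> x != v -> cyc t x v.
Proof. by rewrite inE => /orP[/orP[->|->]|] //. Qed.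

Lemma half (R : unitRingType) n (t v : 'I_n) (D1 : {set 'I_n * 'I_n}) (c1 c2 c : 'I_n -> 'I_n -> R) :
 t != v -> dissection (side1 t v) D1 -> weak_frieze (side1 t v) D1 c1 ->
 c1 t v = c2 t v -> c1 v t = c2 v t -> c1 t v \is a GRing.unit -> c1 v t \is a GRing.unit ->
 (forall i k, in_diag (side1 t v) (i,k) -> c i k = c1 i k) ->
 (forall i k, in_diag (side2 t v) (i,k) -> c i k = c2 i k) ->
 (forall i k, cyc t i v -> cyc v k t -> c i k = c1 i t * (c1 v t)^-1 * c2 v k + c1 i v * (c1 t v)^-1 * c2 t k) ->
 (forall i k, cyc v i t -> cyc t k v -> c i k = c2 i t * (c2 v t)^-1 * c1 v k + c2 i v * (c2 t v)^-1 * c1 t k) ->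
 forall i k r s, (r,s) \in D1 -> cross i k r s ->
   c i k = c i r * (c s r)^-1 * c s k + c i s * (c r s)^-1 * c r k.
Proof.
move=> tv [hD hsym _] W e1 e2 u1 u2 h1 h2 f1 f2 i k r s rs cr.
have sr := hsym _ _ rs.
have hD' : forall p, p \in D1 -> in_diag (side1 t v) p by move=> p /hD /andP[].
have := hD' _ rs; rewrite /in_diag /= => /and3P[rS sS _].
have := cross_dist cr; case/andP => ir /andP[ik /andP[is_ /andP[rk /andP[rsn ks]]]].
have sr' : s != r by rewrite eq_sym.
have sk : s != k by rewrite eq_sym.
have hS1 : forall x y, x \in side1 t v -> y \in side1 t v -> x != y -> c x y = c1 x y.
  by move=> x y xS yS xy; apply: h1; rewrite /in_diag /= xS yS xy.
have hS2 : forall x y, x \in side2 t v -> y \in side2 t v -> x != y -> c x y = c2 x y.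
  by move=> x y xS yS xy; apply: h2; rewrite /in_diag /= xS yS xy.
have vt : (v == t) = false by rewrite eq_sym (negbTE tv).
case: (boolP (i \in side1 t v)) => iS.
- case: (boolP (k \in side1 t v)) => kS.
  + rewrite (hS1 _ _ iS kS ik) (hS1 _ _ iS rS ir) (hS1 _ _ sS rS sr') (hS1 _ _ sS kS sk).
    rewrite (hS1 _ _ iS sS is_) (hS1 _ _ rS sS rsn) (hS1 _ _ rS kS rk).
    by case: W => _ W; apply: W => //; rewrite /in_diag /= iS kS ik.
  + have vkt := notS1 tv kS.
    case: (K4' tv vkt rS sS cr) => tiv Ht Hv.
    have /andP[/andP[vk kt] _] := cycne vkt.
    have /andP[/andP[ti iv] _] := cycne tiv.
    set P := (c1 v t)^-1 * c2 v k; set Q := (c1 t v)^-1 * c2 t k.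
    have hx : forall x, x \in side1 t v -> c x k = zd c1 x t * P + zd c1 x v * Q.
      move=> x xS; rewrite /zd; case: (x =P t) => [->|/eqP xt].
        rewrite (negbTE tv) mul0r add0r (hS2 _ _ (tS2 t v) (cycS2 vkt)) ?(eq_sym t) //.
        by rewrite /Q mulVKr.
      case: (x =P v) => [->|/eqP xv].
        rewrite mul0r addr0 (hS2 _ _ (vS2 t v) (cycS2 vkt)) //.
        by rewrite /P mulVKr.
      by rewrite (f1 _ _ (U1cyc xS xt xv) vkt) /P /Q !mulrA.
    rewrite (hx i iS) (hx s sS) (hx r rS) (hS1 _ _ iS rS ir) (hS1 _ _ sS rS sr') (hS1 _ _ iS sS is_) (hS1 _ _ rS sS rsn).
    have -> : zd c1 i t = c1 i t by rewrite /zd eq_sym (negbTE ti).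
    have -> : zd c1 i v = c1 i v by rewrite /zd (negbTE iv).
    have it : i != t by rewrite eq_sym.
    rewrite (fr_right hD' W iS (tS1 t v) it rs sr ir is_ rsn Ht).
    rewrite (fr_right hD' W iS (vS1 t v) iv rs sr ir is_ rsn Hv).
    by rewrite !mulrDl !mulrDr !mulrA addrACA.
- have vit := notS1 tv iS.
  case: (K4 tv vit rS sS cr) => tkv Ht Hv.
  have /andP[/andP[vi it] _] := cycne vit.
  have /andP[/andP[tk kv] _] := cycne tkv.
  have kS := cycS1 tkv.
  have u2' : c2 v t \is a GRing.unit by rewrite -e2.
  have u1' : c2 t v \is a GRing.unit by rewrite -e1.
  set A := c2 i t * (c2 v t)^-1; set B := c2 i v * (c2 t v)^-1.
  have hx : forall x, x \in side1 t v -> c i x = A * zd c1 v x + B * zd c1 t x.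
    move=> x xS; rewrite /zd; case: (x =P t) => [->|/eqP xt].
      rewrite vt eqxx mulr0 addr0 (hS2 _ _ (cycS2 vit) (tS2 t v) it).
      by rewrite /A e2 divrK.
    case: (x =P v) => [->|/eqP xv].
      have iv : i != v by rewrite eq_sym.
      rewrite eqxx (negbTE tv) mulr0 add0r (hS2 _ _ (cycS2 vit) (vS2 t v) iv).
      by rewrite /B e1 divrK.
    rewrite (f2 _ _ vit (U1cyc xS xt xv)) /A /B ?mulrA.
    by rewrite eq_sym (negbTE xv) eq_sym (negbTE xt).
  rewrite (hx k kS) (hx s sS) (hx r rS) (hS1 _ _ sS rS sr') (hS1 _ _ rS sS rsn) (hS1 _ _ sS kS sk) (hS1 _ _ rS kS rk).
  have -> : zd c1 v k = c1 v k by rewrite /zd eq_sym (negbTE kv).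
  have -> : zd c1 t k = c1 t k by rewrite /zd (negbTE tk).
  have vk : v != k by rewrite eq_sym.
  rewrite (fr_left hD' W (vS1 t v) kS vk rs sr rk sk rsn Hv).
  rewrite (fr_left hD' W (tS1 t v) kS tk rs sr rk sk rsn Ht).
  by rewrite !mulrDl !mulrDr !mulrA addrACA.
Qed.

Unset Implicit Arguments.
Theorem lemma2p6 (R : unitRingType) (n : nat) (t v : 'I_n)
    (D1 D2 : {set 'I_n * 'I_n}) (c1 c2 : 'I_n -> 'I_n -> R) :
  (3 <= n)%N ->
  internal_diag [set: 'I_n] (t, v) ->
  dissection (side1 t v) D1 ->
  dissection (side2 t v) D2 ->
  weak_frieze (side1 t v) D1 c1 ->
  weak_frieze (side2 t v) D2 c2 ->
  c1 t v = c2 t v -> c1 v t = c2 v t ->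
  c1 t v \is a GRing.unit -> c1 v t \is a GRing.unit ->
  let D := [set (t, v); (v, t)] :|: D1 :|: D2 in
  let U1 := side1 t v :\: [set t; v] in
  let U2 := side2 t v :\: [set t; v] in
  exists c : 'I_n -> 'I_n -> R,
    [/\ (* (i) restrictions *)
        (forall i k, in_diag (side1 t v) (i, k) -> c i k = c1 i k),
        (forall i k, in_diag (side2 t v) (i, k) -> c i k = c2 i k),
        (* (ii) weak frieze on P w.r.t. D *)
        weak_frieze [set: 'I_n] D c,
        (* explicit formulas *)
        (forall i k, i \in U1 -> k \in U2 ->
           c i k = c1 i t * (c1 v t)^-1 * c2 v k + c1 i v * (c1 t v)^-1 * c2 t k)
      & (forall i k, i \in U2 -> k \in U1 ->
           c i k = c2 i t * (c2 v t)^-1 * c1 v k + c2 i v * (c2 t v)^-1 * c1 t k)]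
    /\ (* uniqueness on diag P *)
        forall c' : 'I_n -> 'I_n -> R,
          (forall i k, in_diag (side1 t v) (i, k) -> c' i k = c1 i k) ->
          (forall i k, in_diag (side2 t v) (i, k) -> c' i k = c2 i k) ->
          weak_frieze [set: 'I_n] D c' ->
          forall i k, i != k -> c' i k = c i k.
Proof.
move=> n3 tvI dis1 dis2 W1 W2 e1 e2 u1 u2 D U1 U2.
have tv : t != v.
  by move: tvI; rewrite /internal_diag /in_diag /= => /andP[/and3P[]].
have vt : v != t by rewrite eq_sym.
pose c i k := if (i \in side1 t v) && (k \in side1 t v) then c1 i k
  else if (i \in side2 t v) && (k \in side2 t v) then c2 i k
  else if i \in side1 t v then c1 i t * (c1 v t)^-1 * c2 v k + c1 i v * (c1 t v)^-1 * c2 t k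
  else c2 i t * (c2 v t)^-1 * c1 v k + c2 i v * (c2 t v)^-1 * c1 t k.
have P1 : forall i k, in_diag (side1 t v) (i,k) -> c i k = c1 i k.
  by move=> i k /and3P[/= iS kS _]; rewrite /c iS kS.
have P2 : forall i k, in_diag (side2 t v) (i,k) -> c i k = c2 i k.
  move=> i k /and3P[/= iS kS ik]; rewrite /c iS kS.
  case: ifP => // /andP[iS1 kS1].
  have := L_both iS1 iS; have := L_both kS1 kS.
  case/orP => /eqP ke; case/orP => /eqP ie; subst => //.
  - by move: ik; rewrite eqxx.
  - by move: ik; rewrite eqxx.
have P3 : forall i k, cyc t i v -> cyc v k t ->
    c i k = c1 i t * (c1 v t)^-1 * c2 v k + c1 i v * (c1 t v)^-1 * c2 t k.
  by move=> i k tiv vkt; rewrite /c (cycS1 tiv) (negbTE (U2notS1 vkt)) (negbTE (U1notS2 tiv)).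
have P4 : forall i k, cyc v i t -> cyc t k v ->
    c i k = c2 i t * (c2 v t)^-1 * c1 v k + c2 i v * (c2 t v)^-1 * c1 t k.
  by move=> i k vit tkv; rewrite /c (negbTE (U2notS1 vit)) (negbTE (U1notS2 tkv)) /= andbF.
have hS1 : forall x y, x \in side1 t v -> y \in side1 t v -> x != y -> c x y = c1 x y.
  by move=> x y xS yS xy; apply: P1; rewrite /in_diag /= xS yS xy.
have hS2 : forall x y, x \in side2 t v -> y \in side2 t v -> x != y -> c x y = c2 x y.
  by move=> x y xS yS xy; apply: P2; rewrite /in_diag /= xS yS xy.
have tvD : (t, v) \in D by rewrite /D !inE eqxx.
have vtD : (v, t) \in D by rewrite /D !inE eqxx !orbT.
exists c; split; first split.
- exact: P1.
- exact: P2.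
- split.
  + move=> r s; rewrite /D !inE => /orP[/orP[/orP[|]|]|].
    * by move/eqP => [-> ->]; rewrite (hS1 _ _ (tS1 t v) (vS1 t v) tv).
    * by move/eqP => [-> ->]; rewrite (hS1 _ _ (vS1 t v) (tS1 t v) vt).
    * move=> rs; rewrite P1; first by case: W1 => W _; apply: W.
      by case: dis1 => hD _ _; case/andP: (hD _ rs).
    * move=> rs; rewrite P2; first by case: W2 => W _; apply: W.
      by case: dis2 => hD _ _; case/andP: (hD _ rs).
  + move=> i k r s _ rsD srD cr.
    move: rsD; rewrite /D !inE => /orP[/orP[/orP[|]|]|].
    * move/eqP => [er es]; subst r s.
      case/orP: (K2 tv cr) => /andP[tiv vkt].
      - have /andP[/andP[ti iv] _] := cycne tiv.
        have /andP[/andP[vk kt] _] := cycne vkt.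
        rewrite (P3 _ _ tiv vkt) (hS1 _ _ (cycS1 tiv) (tS1 t v)) ?(eq_sym i) //.
        rewrite (hS1 _ _ (vS1 t v) (tS1 t v) vt) (hS2 _ _ (vS2 t v) (cycS2 vkt) vk).
        rewrite (hS1 _ _ (cycS1 tiv) (vS1 t v) iv) (hS1 _ _ (tS1 t v) (vS1 t v) tv).
        by rewrite (hS2 _ _ (tS2 t v) (cycS2 vkt)) ?(eq_sym t).
      - have /andP[/andP[vi it] _] := cycne tiv.
        have /andP[/andP[tk kv] _] := cycne vkt.
        rewrite (P4 _ _ tiv vkt) (hS2 _ _ (cycS2 tiv) (tS2 t v) it).
        rewrite (hS2 _ _ (vS2 t v) (tS2 t v) vt) (hS1 _ _ (vS1 t v) (cycS1 vkt)) ?(eq_sym v) //.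
        rewrite (hS2 _ _ (cycS2 tiv) (vS2 t v)) ?(eq_sym i) // (hS2 _ _ (tS2 t v) (vS2 t v) tv).
        by rewrite (hS1 _ _ (tS1 t v) (cycS1 vkt) tk).
    * move/eqP => [er es]; subst r s; rewrite addrC.
      case/orP: (K2' tv cr) => /andP[tiv vkt].
      - have /andP[/andP[ti iv] _] := cycne tiv.
        have /andP[/andP[vk kt] _] := cycne vkt.
        rewrite (P3 _ _ tiv vkt) (hS1 _ _ (cycS1 tiv) (tS1 t v)) ?(eq_sym i) //.
        rewrite (hS1 _ _ (vS1 t v) (tS1 t v) vt) (hS2 _ _ (vS2 t v) (cycS2 vkt) vk).
        rewrite (hS1 _ _ (cycS1 tiv) (vS1 t v) iv) (hS1 _ _ (tS1 t v) (vS1 t v) tv).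
        by rewrite (hS2 _ _ (tS2 t v) (cycS2 vkt)) ?(eq_sym t).
      - have /andP[/andP[vi it] _] := cycne tiv.
        have /andP[/andP[tk kv] _] := cycne vkt.
        rewrite (P4 _ _ tiv vkt) (hS2 _ _ (cycS2 tiv) (tS2 t v) it).
        rewrite (hS2 _ _ (vS2 t v) (tS2 t v) vt) (hS1 _ _ (vS1 t v) (cycS1 vkt)) ?(eq_sym v) //.
        rewrite (hS2 _ _ (cycS2 tiv) (vS2 t v)) ?(eq_sym i) // (hS2 _ _ (tS2 t v) (vS2 t v) tv).
        by rewrite (hS1 _ _ (tS1 t v) (cycS1 vkt) tk).
    * by move=> rs; apply: (half tv dis1 W1 e1 e2 u1 u2 P1 P2 P3 P4 rs cr).
    * move=> rs.
      have dis2' : dissection (side1 v t) D2 by rewrite sideSw1.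
      have W2' : weak_frieze (side1 v t) D2 c2 by rewrite sideSw1.
      have u2' : c2 v t \is a GRing.unit by rewrite -e2.
      have u1' : c2 t v \is a GRing.unit by rewrite -e1.
      have P1' : forall i k, in_diag (side1 v t) (i,k) -> c i k = c2 i k.
        by rewrite sideSw1.
      have P2' : forall i k, in_diag (side2 v t) (i,k) -> c i k = c1 i k.
        by rewrite sideSw2.
      have P3' : forall i k, cyc v i t -> cyc t k v ->
          c i k = c2 i v * (c2 t v)^-1 * c1 t k + c2 i t * (c2 v t)^-1 * c1 v k.
        by move=> i' k' a b; rewrite P4 // addrC.
      have P4' : forall i k, cyc t i v -> cyc v k t ->
          c i k = c1 i v * (c1 t v)^-1 * c2 t k + c1 i t * (c1 v t)^-1 * c2 v k.
        by move=> i' k' a b; rewrite P3 // addrC.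
      exact: (half vt dis2' W2' (esym e2) (esym e1) u2' u1' P1' P2' P3' P4' rs cr).
- move=> i k; rewrite /U1 /U2 U1E U2E; exact: P3.
- move=> i k; rewrite /U1 /U2 U1E U2E; exact: P4.
move=> c' Q1 Q2 [_ Wc'] i k ik.
have hQ1 : forall x y, x \in side1 t v -> y \in side1 t v -> x != y -> c' x y = c1 x y.
  by move=> x y xS yS xy; apply: Q1; rewrite /in_diag /= xS yS xy.
have hQ2 : forall x y, x \in side2 t v -> y \in side2 t v -> x != y -> c' x y = c2 x y.
  by move=> x y xS yS xy; apply: Q2; rewrite /in_diag /= xS yS xy.
have ikd : in_diag [set: 'I_n] (i, k) by rewrite /in_diag /= !inE ik.
case: (boolP ((i \in side1 t v) && (k \in side1 t v))) => [/andP[iS kS]|n1].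
  by rewrite hQ1 // hS1.
case: (boolP ((i \in side2 t v) && (k \in side2 t v))) => [/andP[iS kS]|n2].
  by rewrite hQ2 // hS2.
case: (boolP (i \in side1 t v)) => iS.
- rewrite iS /= in n1.
  have vkt := notS1 tv n1.
  have iS2 : i \notin side2 t v by move: n2; rewrite (cycS2 vkt) andbT.
  have tiv := notS2 tv iS2.
  have /andP[/andP[ti iv] _] := cycne tiv.
  have /andP[/andP[vk kt] _] := cycne vkt.
  rewrite (Wc' i k t v ikd tvD vtD (K3 tiv vkt)) (P3 _ _ tiv vkt).
  rewrite (hQ1 _ _ (cycS1 tiv) (tS1 t v)) ?(eq_sym i) //.
  rewrite (hQ1 _ _ (vS1 t v) (tS1 t v) vt) (hQ2 _ _ (vS2 t v) (cycS2 vkt) vk).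
  rewrite (hQ1 _ _ (cycS1 tiv) (vS1 t v) iv) (hQ1 _ _ (tS1 t v) (vS1 t v) tv).
  by rewrite (hQ2 _ _ (tS2 t v) (cycS2 vkt)) ?(eq_sym t).
- have vit := notS1 tv iS.
  have kS2 : k \notin side2 t v by move: n2; rewrite (cycS2 vit).
  have tkv := notS2 tv kS2.
  have /andP[/andP[vi it] _] := cycne vit.
  have /andP[/andP[tk kv] _] := cycne tkv.
  rewrite (Wc' i k v t ikd vtD tvD (K3 vit tkv)) (P4 _ _ vit tkv) addrC.
  rewrite (hQ2 _ _ (cycS2 vit) (tS2 t v) it).
  rewrite (hQ2 _ _ (vS2 t v) (tS2 t v) vt) (hQ1 _ _ (vS1 t v) (cycS1 tkv)) ?(eq_sym v) //.
  rewrite (hQ2 _ _ (cycS2 vit) (vS2 t v)) ?(eq_sym i) // (hQ2 _ _ (tS2 t v) (vS2 t v) tv).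
  by rewrite (hQ1 _ _ (tS1 t v) (cycS1 tkv) tk).
Qed.
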